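(* Consider the four-thread trace $T$ (positions 1–14): $acq(y)$ (thread 1), $w(z_1)$ (thread 1), $r(z_1)$ (thread 2), $w(x)$ (thread 2), $w(z_2)$ (thread 2), $r(z_2)$ (thread 1), $rel(y)$ (thread 1), $acq(y)$ (thread 3), $w(z_3)$ (thread 3), $r(z_3)$ (thread 4), $w(x)$ (thread 4), $w(z_4)$ (thread 4), $r(z_4)$ (thread 3), $rel(y)$ (thread 3). Let $e$ be the write on $x$ at position 4 and $f$ the write on $x$ at position 11. Then $(e,f)$ is a potential Lockset-PWR data race pair of $T$ (with $LS(e)=LS(f)=\emptyset$), but $(e,f)\notin\mathcal{P}(T)$. In particular, not every potential Lockset-PWR data race pair is predictable.
   Context: Traces. A trace $T$ is a finite sequence of pairwise distinct events. Each event $e$ belongs to a thread $\mathrm{tid}(e)$ and is one of: a read $r(x)$ or write $w(x)$ of a shared variable $x$, or an acquire $acq(y)$ or release $rel(y)$ of a lock $y$. $\mathrm{pos}_T(e)$ is the index of $e$ in $T$. The projection of $T$ onto thread $i$ is the subsequence of events of thread $i$. A critical section $CS$ on lock $y$ consists of a matching acquire/release pair $acq(CS)$, $rel(CS)$ in thread $i$ together with the events of thread $i$ between them; we write $e \in CS$. The lockset $LS(e)$ of an event $e$ is the set of locks $y$ such that $e$ belongs to some critical section on $y$. Two events are conflicting if they are reads/writes on the same variable, at least one is a write, and they belong to different threads. For a read $e$ on $x$, a write $f$ on $x$ is the last write of $e$ w.r.t. $T$ if $f$ precedes $e$ in $T$ and no other write on $x$ lies strictly between them. Correct reordering. $T'$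 is a correctly reordered prefix of $T$ if $T'$ is a sequence of some of the events of $T$ such that: (i) for every thread $i$, the projection of $T'$ onto $i$ is a prefix of the projection of $T$ onto $i$; (ii) for every read $e$ in $T'$ whose last write w.r.t. $T$ is $f$, $f$ is in $T'$ and is also the last write of $e$ w.r.t. $T'$; (iii) for any two acquires $e_1,e_2$ on the same lock with $e_1$ before $e_2$ in $T'$, the matching release of $e_1$ is in $T'$ and lies strictly between $e_1$ and $e_2$. Predictable races. $(e,f)$ is a predictable data race pair of $T$ if $e,f$ are conflicting events of $T$ and there is a correctly reordered prefix $T'$ of $T$ in which $e$ appears immediately before $f$; if both are writes we additionally require $\mathrm{pos}_T(e)<\mathrm{pos}_T(f)$. $\mathcal{P}(T)$ denotes the set of all such pairs. PWR relation. $<^{PWR}$ is the smallest strict partial order on the events of $T$ such that: (PO) if $\mathrm{tid}(e)=\mathrm{tid}(f)$ and $\mathrm{pos}_T(e)<\mathrm{pos}_T(f)$ then $e<^{PWR}f$; (WRD) if the write $w$ is the last write w.r.t. $T$ of the read $r$ then $w<^{PWR}r$; (ROD) if $CS, CS'$ are distinct critical sections on the same lock, $e\in CS$, $f\in CS'$ and $e<^{PWR}f$, then $rel(CS)<^{PWR}f$. Potential pairs. $(e,f)$ is a potential Lockset-PWR data race pair if $e,f$ are conflicting, $LS(e)\cap LS(f)=\emptyset$, neither $e<^{PWR}f$ nor $f<^{PWR}e$, and either both are writes or $e$ is a read and $f$ a write. *)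

(* Defs.v *)
From HB Require Import structures.
From mathcomp Require Import all_boot.
Set Implicit Arguments. Unset Strict Implicit. Unset Printing Implicit Defensive.

Inductive op := Read of nat | Write of nat | Acq of nat | Rel of nat.

Definition op_code (o : op) : nat * nat :=
  match o with Read x => (0, x) | Write x => (1, x) | Acq y => (2, y) | Rel y => (3, y) end.
Definition op_decode (p : nat * nat) : op :=
  match p with (0, x) => Read x | (1, x) => Write x | (2, y) => Acq y | (_, y) => Rel y end.
Lemma op_codeK : cancel op_code op_decode. Proof. by case. Qed.
HB.instance Definition _ := Equality.copy op (can_type op_codeK).

Record event := Event { eid : nat; tid : nat; eop : op }.
Definition event_code (e : event) := (eid e, tid e, eop e).
Definition event_decode (p : nat * nat * op) := Event p.1.1 p.1.2 p.2.
Lemma event_codeK : cancel event_code event_decode. Proof. by case. Qed.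
HB.instance Definition _ := Equality.copy event (can_type event_codeK).

(* A trace is a sequence of pairwise distinct events; pos_T(e) = index e T. *)
Definition trace := seq event.
Definition pos (T : trace) (e : event) : nat := index e T.

Definition is_read (e : event) : bool := if eop e is Read _ then true else false.
Definition is_write (e : event) : bool := if eop e is Write _ then true else false.
Definition accesses (x : nat) (e : event) : bool :=
  (eop e == Read x) || (eop e == Write x).

Definition proj (T : trace) (i : nat) : trace := [seq e <- T | tid e == i].

Definition matching (T : trace) (y : nat) (a r : event) : Prop :=
  [/\ a \in T /\ r \in T, eop a = Acq y /\ eop r = Rel y, tid r = tid a,
      pos T a < pos T r &
      forall g, g \in T -> tid g = tid a -> eop g = Rel y ->
        ~ (pos T a < pos T g < pos T r)].

Definition in_CS (T : trace) (y : nat) (a r e : event) : Prop :=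
  [/\ matching T y a r, e \in T, tid e = tid a & pos T a <= pos T e <= pos T r].

Definition LS (T : trace) (e : event) (y : nat) : Prop :=
  exists a r, in_CS T y a r e.

Definition conflicting (T : trace) (e f : event) : Prop :=
  [/\ e \in T, f \in T,
      exists x, accesses x e && accesses x f,
      is_write e || is_write f & tid e <> tid f].

Definition last_write (T : trace) (r w : event) : Prop :=
  exists x, [/\ r \in T /\ w \in T, eop r = Read x /\ eop w = Write x,
    pos T w < pos T r &
    forall g, g \in T -> g <> w -> eop g = Write x -> ~ (pos T w < pos T g < pos T r)].

Definition correct_reordering (T T' : trace) : Prop :=
  [/\ uniq T', {subset T' <= T},
      (forall i, prefix (proj T' i) (proj T i)),
      (forall r w, r \in T' -> last_write T r w -> w \in T' /\ last_write T' r w) &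
      (forall y e1 e2, e1 \in T' -> e2 \in T' -> eop e1 = Acq y -> eop e2 = Acq y ->
         pos T' e1 < pos T' e2 ->
         exists r, [/\ matching T y e1 r, r \in T' & pos T' e1 < pos T' r < pos T' e2])].

Definition predictable (T : trace) (e f : event) : Prop :=
  [/\ conflicting T e f,
      exists T' s1 s2, correct_reordering T T' /\ T' = s1 ++ e :: f :: s2 &
      is_write e -> is_write f -> pos T e < pos T f].

Inductive pwr (T : trace) : event -> event -> Prop :=
| pwr_po e f : e \in T -> f \in T -> tid e = tid f -> pos T e < pos T f -> pwr T e f
| pwr_wrd w r : last_write T r w -> pwr T w r
| pwr_rod y a r a' r' e f :
    a <> a' -> in_CS T y a r e -> in_CS T y a' r' f -> pwr T e f -> pwr T r f
| pwr_trans e g f : pwr T e g -> pwr T g f -> pwr T e f.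

Definition potential (T : trace) (e f : event) : Prop :=
  [/\ conflicting T e f,
      (forall y, ~ (LS T e y /\ LS T f y)),
      ~ pwr T e f, ~ pwr T f e &
      (is_write e && is_write f) || (is_read e && is_write f)].

(* The concrete trace of the theorem: lock y = 0, variable x = 0,
   z_i = i; event ids are the positions 1..14. *)
Definition y0 := 0.
Definition x0 := 0.
Definition Tex : trace :=
  [:: Event 1 1 (Acq y0);
      Event 2 1 (Write 1);
      Event 3 2 (Read 1);
      Event 4 2 (Write x0);
      Event 5 2 (Write 2);
      Event 6 1 (Read 2);
      Event 7 1 (Rel y0);
      Event 8 3 (Acq y0);
      Event 9 3 (Write 3);
      Event 10 4 (Read 3);
      Event 11 4 (Write x0);
      Event 12 4 (Write 4);
      Event 13 3 (Read 4);
      Event 14 3 (Rel y0)].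
Definition e_ex := Event 4 2 (Write x0).
Definition f_ex := Event 11 4 (Write x0).

(* Main.v *)
Require Import Defs.
From mathcomp Require Import all_boot.
From Stdlib Require Import Lia.
From mathcomp Require Import zify.

Ltac enum H := move: H; rewrite !in_cons in_nil ?orbF;
  repeat case/orP; move/eqP=> ->.

Definition rw_ok (r w : event) : bool :=
  match eop r, eop w with
  | Read x, Write x' => (x != x') || ((tid r <= 2) == (tid w <= 2))
  | _, _ => true end.

Lemma rw_all : all (fun r => all (fun w => rw_ok r w) Tex) Tex.
Proof. vm_compute; reflexivity. Qed.

Lemma pwr_half e f : pwr Tex e f -> (tid e <= 2) = (tid f <= 2).
Proof.
elim=> {e f}.
- by move=> e f _ _ ->.
- move=> w r [x [[Hr Hw] [Er Ew] _ _]].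
  have := allP (allP rw_all r Hr) w Hw.
  by rewrite /rw_ok Er Ew eqxx /= => /eqP.
- move=> y a r a' r' e f _ [[_ _ Htr _ _] _ Hte _] _ _ IH.
  by rewrite Htr -Hte.
- by move=> e g f _ IH1 _ IH2; rewrite IH1 IH2.
Qed.

Definition is_acq (a : event) : bool := if eop a is Acq _ then true else false.

Lemma acq_all : all (fun a => is_acq a ==> (tid a != 2) && (tid a != 4)) Tex.
Proof. vm_compute; reflexivity. Qed.

Lemma LS_none e y : (tid e == 2) || (tid e == 4) -> ~ LS Tex e y.
Proof.
move=> Ht [a [r [[[Ha _] [Ea _] _ _ _] _ Hte _]]].
have := implyP (allP acq_all a Ha); rewrite /is_acq Ea => /(_ isT).
by rewrite -Hte; case/orP: Ht => /eqP -> .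
Qed.

Lemma index_filter (T : eqType) (P : pred T) (s : seq T) a b :
  P a -> P b -> a \in s -> b \in s ->
  (index a s < index b s) = (index a (filter P s) < index b (filter P s)).
Proof.
move=> Pa Pb; elim: s => [//|x s IH] /=.
rewrite !in_cons.
case: (eqVneq x a) => [Exa|Hxa]; case: (eqVneq x b) => [Exb|Hxb] /=.
- by subst; rewrite Pa /= eqxx.
- subst; rewrite Pa /= eqxx (negbTE Hxb) //.
- subst; rewrite Pb /= eqxx (negbTE Hxa) ltn0 //.
- move=> Ha Hb; rewrite ltnS IH //.
  by case: (P x) => //=; rewrite (negbTE Hxa) (negbTE Hxb).
Qed.

Lemma po_lemma T T' i a b :
  (forall i, prefix (proj T' i) (proj T i)) -> tid a = i -> tid b = i ->
  b \in T' -> index a (proj T i) < index b (proj T i) ->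
  a \in T' /\ index a T' < index b T'.
Proof.
move=> Hp Ha Hb HbT Hlt.
have Hbp : b \in proj T' i by rewrite mem_filter Hb eqxx.
case/prefixP: (Hp i) => s' Hs.
move: Hlt; rewrite Hs !index_cat Hbp.
case Hap : (a \in proj T' i); last first.
  move=> H; have : index b (proj T' i) < size (proj T' i) by rewrite index_mem.
  move=> H2; exfalso; have H3 := leq_ltn_trans (leq_addr _ _) H; have := ltn_trans H3 H2; by rewrite ltnn.
have HaT : a \in T' by move: Hap; rewrite mem_filter => /andP[].
move=> H; split => //.
rewrite (@index_filter _ (fun e : event => tid e == i)) //; by rewrite ?Ha ?Hb ?eqxx.
Qed.

Ltac lwtac := exists 1; split.

Lemma lw_gen r w x : r \in Tex -> w \in Tex -> eop r = Read x -> eop w = Write x ->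
  pos Tex w < pos Tex r ->
  all (fun g => (g == w) || (eop g != Write x) || ~~ (pos Tex w < pos Tex g < pos Tex r)) Tex ->
  last_write Tex r w.
Proof.
move=> Hr Hw Er Ew Hp Ha; exists x; split => // g Hg Hne Eg.
have := allP Ha g Hg; rewrite Eg eqxx /=.
case: eqP => // _ /= /negP //.
Qed.

Ltac vmt := vm_compute; reflexivity.
Ltac lwproof x := apply: (@lw_gen _ _ x); vmt.

Lemma lw3 : last_write Tex (Event 3 2 (Read 1)) (Event 2 1 (Write 1)). Proof. lwproof 1. Qed.
Lemma lw6 : last_write Tex (Event 6 1 (Read 2)) (Event 5 2 (Write 2)). Proof. lwproof 2. Qed.
Lemma lw10 : last_write Tex (Event 10 4 (Read 3)) (Event 9 3 (Write 3)). Proof. lwproof 3. Qed.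
Lemma lw13 : last_write Tex (Event 13 3 (Read 4)) (Event 12 4 (Write 4)). Proof. lwproof 4. Qed.

Notation E1 := (Event 1 1 (Acq y0)).
Notation E2 := (Event 2 1 (Write 1)).
Notation E3 := (Event 3 2 (Read 1)).
Notation E5 := (Event 5 2 (Write 2)).
Notation E6 := (Event 6 1 (Read 2)).
Notation E7 := (Event 7 1 (Rel y0)).
Notation E8 := (Event 8 3 (Acq y0)).
Notation E9 := (Event 9 3 (Write 3)).
Notation E10 := (Event 10 4 (Read 3)).
Notation E12 := (Event 12 4 (Write 4)).
Notation E13 := (Event 13 3 (Read 4)).
Notation E14 := (Event 14 3 (Rel y0)).

Definition is_rel (a : event) : bool := if eop a is Rel _ then true else false.

Lemma rel_all : all (fun r => is_rel r ==>
   ((tid r == 1) ==> (r == E7)) && ((tid r == 3) ==> (r == E14))) Tex.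
Proof. vmt. Qed.

Lemma match1 y r : matching Tex y E1 r -> r = E7.
Proof.
case=> [[_ Hr] [_ Er] Ht _ _]; have := implyP (allP rel_all r Hr).
rewrite /is_rel Er Ht => /(_ isT) /andP[+ _] => /implyP /(_ isT) /eqP //.
Qed.

Lemma match8 y r : matching Tex y E8 r -> r = E14.
Proof.
case=> [[_ Hr] [_ Er] Ht _ _]; have := implyP (allP rel_all r Hr).
rewrite /is_rel Er Ht => /(_ isT) /andP[_ +] => /implyP /(_ isT) /eqP //.
Qed.

Lemma lw_pos T' r w : (forall r w, r \in T' -> last_write Tex r w -> w \in T' /\ last_write T' r w) ->
  r \in T' -> last_write Tex r w -> w \in T' /\ index w T' < index r T'.
Proof.
move=> H Hr Hl; case: (H r w Hr Hl) => Hw [x [_ _ Hp _]]; by split.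
Qed.

Lemma np : ~ predictable Tex e_ex f_ex.
Proof.
move=> [_ [T' [s1 [s2 [[HU Hsub Hpre Hlw Hlock] HT]]]] _].
move: (HU); rewrite HT cat_uniq => /and3P [_ Hh _].
move: Hh; rewrite /= !negb_or => /andP[He /andP[Hf _]].
have ie : index e_ex T' = size s1.
  by rewrite HT index_cat (negbTE He) index_head addn0.
have ef : (f_ex == e_ex) = false by vmt.
have iff : index f_ex T' = (size s1).+1.
  rewrite HT index_cat (negbTE Hf).
  have -> : index f_ex (e_ex :: f_ex :: s2) = (if f_ex == e_ex then 0 else (index f_ex (f_ex :: s2)).+1) by [].
  by rewrite ef index_head addn1.
have He' : e_ex \in T' by rewrite HT mem_cat in_cons eqxx orbT.
have Hf' : f_ex \in T' by rewrite HT mem_cat !in_cons eqxx !orbT.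
have [H3 i3] := po_lemma Tex T' 2 E3 e_ex Hpre erefl erefl He' ltac:(vmt).
have [H2 i2] := lw_pos _ _ _ Hlw H3 lw3.
have [H1 i1] := po_lemma Tex T' 1 E1 E2 Hpre erefl erefl H2 ltac:(vmt).
have [H10 i10] := po_lemma Tex T' 4 E10 f_ex Hpre erefl erefl Hf' ltac:(vmt).
have [H9 i9] := lw_pos _ _ _ Hlw H10 lw10.
have [H8 i8] := po_lemma Tex T' 3 E8 E9 Hpre erefl erefl H9 ltac:(vmt).
case: (ltngtP (index E1 T') (index E8 T')) => Hc.
- have [r [Hm Hr Hp]] := Hlock y0 E1 E8 H1 H8 erefl erefl Hc.
  rewrite (match1 _ _ Hm) in Hr Hp.
  have [H6 i6] := po_lemma Tex T' 1 E6 E7 Hpre erefl erefl Hr ltac:(vmt).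
  have [H5 i5] := lw_pos _ _ _ Hlw H6 lw6.
  have [_ i4] := po_lemma Tex T' 2 e_ex E5 Hpre erefl erefl H5 ltac:(vmt).
  rewrite /pos in Hp; move/andP: Hp => [_ Hp]; clear -ie iff i4 i5 i6 Hp i8 i9 i10; lia.
- have [r [Hm Hr Hp]] := Hlock y0 E8 E1 H8 H1 erefl erefl Hc.
  rewrite (match8 _ _ Hm) in Hr Hp.
  have [H13 i13] := po_lemma Tex T' 3 E13 E14 Hpre erefl erefl Hr ltac:(vmt).
  have [H12 i12] := lw_pos _ _ _ Hlw H13 lw13.
  have [_ i11] := po_lemma Tex T' 4 f_ex E12 Hpre erefl erefl H12 ltac:(vmt).
  rewrite /pos in Hp; move/andP: Hp => [_ Hp]; clear -ie iff i11 i12 i13 Hp i1 i2 i3; lia.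
- have := nth_index E1 H1; rewrite Hc nth_index //.
Qed.

Lemma pot : potential Tex e_ex f_ex.
Proof.
split.
- split; try vmt; last by []. by exists 0; vmt.
- move=> y [H _]; exact: (LS_none e_ex y isT H).
- by move/pwr_half.
- by move/pwr_half.
- vmt.
Qed.

Theorem mainTheorem4 :
  [/\ uniq Tex /\ e_ex \in Tex /\ f_ex \in Tex,
      potential Tex e_ex f_ex,
      (forall y, ~ LS Tex e_ex y) /\ (forall y, ~ LS Tex f_ex y),
      ~ predictable Tex e_ex f_ex &
      exists T (e f : event), [/\ uniq T, potential T e f & ~ predictable T e f]].
Proof.
split.
- by split; [vmt | split; vmt].
- exact: pot.
- by split=> y; apply: LS_none; vmt.
- exact: np.
- by exists Tex, e_ex, f_ex; split; [vmt | exact: pot | exact: np].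
Qed.
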